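(* Let $(R,\delta_R^* )$ be an iterative $q$-difference ring which is an integral domain, and let $S\subset R$ be a multiplicatively closed subset with $0\notin S$ and $\sigma_q(S)\subseteq S$. Then there exists a unique iterative $q$-difference operator $\delta_{S^{-1}R}^*$ on $S^{-1}R$ extending $\delta_R^*$.
   Context: Let $C$ be an algebraically closed field and $q\in C$, $q\ne1$. Let $F=C(t)$ with the automorphism $\sigma_q(f(t))=f(qt)$. $\binom{r}{k}_q$ is the value at $q$ of the Gaussian polynomial $\prod_{i=1}^{k}\frac{1-x^{r-i+1}}{1-x^{i}}\in\mathbb Z[x]$. An iterative $q$-difference ring is a commutative $F$-algebra $R$ with a ring automorphism $\sigma_q$ extending that of $F$ together with an iterative $q$-difference operator, i.e. a family $\delta_R^*=(\delta_R^{(k)})_{k\in\mathbb N}$ of maps $R\to R$ such that for all $a,b\in R$, $i,j,k\in\mathbb N$: $\delta_R^{(0)}=\mathrm{id}$; $\delta_R^{(1)}=\frac{\sigma_q-\mathrm{id}}{(q-1)t}$; $\delta_R^{(k)}$ is additive; $\delta_R^{(k)}(ab)=\sum_{i+j=k}\sigma_q^i(\delta_R^{(j)}(a))\delta_R^{(i)}(b)$; $\delta_R^{(i)}\circ\delta_R^{(j)}=\binom{i+j}{i}_q\delta_R^{(i+j)}$. (On $S^{-1}R$, $\sigma_q$ is extended by $\sigma_q(a/s)=\sigma_q(a)/\sigma_q(s)$.) *)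

(* Defs.v *)
From HB Require Import structures.
From mathcomp Require Import all_boot all_order all_algebra.
Set Implicit Arguments. Unset Strict Implicit. Unset Printing Implicit Defensive.
Import Order.TTheory GRing.Theory Num.Theory.
Local Open Scope ring_scope.
From mathcomp Require Import fraction generic_quotient.

Notation "x %:F" := (@FracField.tofrac _ x) : ring_scope.

(* Extension of a map f : R -> R to the fraction field of R, by
   f(a/b) := f(a)/f(b), computed on the canonical representative of the class.
   (Well defined, i.e. independent of the representative, when f is an
   injective ring morphism.) *)
Definition frac_lift (R : idomainType) (f : R -> R) (x : {fraction R})
  : {fraction R} :=
  let r := repr x in (f \n_r)%:F / (f \d_r)%:F.

Notation ratfun C := {fraction {poly C}}.

Definition sigma_poly (C : closedFieldType) (q : C) (p : {poly C}) : {poly C} :=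
  p \Po (q *: 'X).
Definition sigmaF (C : closedFieldType) (q : C) : ratfun C -> ratfun C :=
  frac_lift (sigma_poly q).

Definition qm1t (C : closedFieldType) (q : C) : ratfun C :=
  ((q - 1) *: 'X)%:F.

(* Gaussian polynomial prod_{i=1}^k (1 - x^(r-i+1)) / (1 - x^i) in Z[x]
   (the division is exact; the divisor has unit leading coefficient) *)
Definition gauss_poly (r k : nat) : {poly int} :=
  (\prod_(1 <= i < k.+1) (1 - 'X^(r.+1 - i)))
    %/ (\prod_(1 <= i < k.+1) (1 - 'X^i)).

Definition qbinom (C : closedFieldType) (q : C) (r k : nat) : C :=
  (map_poly (fun z : int => z%:~R) (gauss_poly r k)).[q].

(* Iterative q-difference operator d on the subring D of the commutative
   ring A, where A is an F-algebra via phi and sig is the automorphism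
   (restricted to D). *)
Definition is_iter_qdiff (C : closedFieldType) (q : C) (A : comNzRingType)
    (D : A -> Prop) (phi : ratfun C -> A) (sig : A -> A)
    (d : nat -> A -> A) : Prop :=
  [/\ (forall k a, D a -> D (d k a)),
      (forall a, D a -> d 0%N a = a)
    & (forall a, D a -> d 1%N a = (sig a - a) * phi (qm1t q)^-1)] /\
  [/\ (forall k a b, D a -> D b -> d k (a + b) = d k a + d k b),
      (forall k a b, D a -> D b ->
          d k (a * b) = \sum_(i < k.+1) iter i sig (d (k - i)%N a) * d i b)
    & (forall i j a, D a ->
          d i (d j a) = phi ((qbinom q (i + j) i)%:P)%:F * d (i + j)%N a)].

(* S^{-1}R, realized (R being a domain and 0 \notin S) as the subring
   { a/s : a in R, s in S } of the fraction field of R *)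
Definition loc (R : idomainType) (S : pred R) (x : {fraction R}) : Prop :=
  exists a s, s \in S /\ x = a%:F / s%:F.

(* Main.v *)
Require Import Defs.
From HB Require Import structures.
From mathcomp Require Import all_boot all_order all_algebra.
From mathcomp Require Import fraction generic_quotient.
From mathcomp Require Import ring zify.
From Stdlib Require Import FunctionalExtensionality.
Import GRing.Theory.
Local Open Scope ring_scope.

Section Ext.
Variable R : idomainType.
Variable sig : {rmorphism R -> R}.
Hypothesis sig_inj : injective sig.

Local Notation K := {fraction R}.

Lemma fracE (x : K) : x * (\d_(repr x))%:F = (\n_(repr x))%:F.
Proof.
have E := reprK x. set r := repr x in E *. rewrite -{1}E.
rewrite /GRing.mul /= !piE.
apply/eqmodP; rewrite /= FracField.equivfE /FracField.mulf /=.
rewrite !numden_Ratio ?mulf_neq0 ?oner_eq0 ?denom_ratioP //.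
by rewrite !mulr1 mulrC.
Qed.

Lemma tofrac_neq0 (a : R) : a != 0 -> a%:F != 0 :> K.
Proof. by rewrite tofrac_eq0. Qed.
Arguments tofrac_neq0 {a}.

Lemma fracE' (x : K) : x = (\n_(repr x))%:F / (\d_(repr x))%:F.
Proof.
by rewrite -fracE mulfK //; exact: tofrac_neq0 (denom_ratioP _).
Qed.

Lemma frac_rep (x : K) : exists a b, b != 0 /\ x = a%:F / b%:F.
Proof. exists (\n_(repr x)), (\d_(repr x)); split; [exact: denom_ratioP|exact: fracE']. Qed.

Lemma sig_neq0 a : a != 0 -> sig a != 0.
Proof. move=> a0; apply/eqP => h; move/eqP: a0; apply; apply: sig_inj; by rewrite h rmorph0. Qed.

Lemma frac_eq (a b c d : R) : b != 0 -> d != 0 ->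
  (a%:F / b%:F == c%:F / d%:F :> K) = (a * d == c * b).
Proof.
by move=> b0 d0; rewrite eqr_div ?tofrac_neq0 // -!tofracM tofrac_eq.
Qed.

Definition sK : K -> K := frac_lift sig.

Lemma sK_frac a b : b != 0 -> sK (a%:F / b%:F) = (sig a)%:F / (sig b)%:F.
Proof.
move=> b0; rewrite /sK /frac_lift.
set x := a%:F / b%:F.
have dn := denom_ratioP (repr x).
have E := fracE' x.
have : (a%:F / b%:F == (\n_(repr x))%:F / (\d_(repr x))%:F :> K) by rewrite -E.
rewrite frac_eq // => /eqP h.
apply/eqP; rewrite frac_eq ?sig_neq0 //.
by rewrite -!rmorphM h.
Qed.

Lemma sK_tofrac a : sK a%:F = (sig a)%:F.
Proof.
by rewrite -[a%:F]divr1 -tofrac1 sK_frac ?oner_eq0 // rmorph1 tofrac1 divr1.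
Qed.

Lemma sKD x y : sK (x + y) = sK x + sK y.
Proof.
have [a [b [b0 ->]]] := frac_rep x.
have [c [d [d0 ->]]] := frac_rep y.
have b0' := tofrac_neq0 b0; have d0' := tofrac_neq0 d0.
rewrite addf_div // -!tofracM -tofracD !sK_frac ?mulf_neq0 //.
rewrite addf_div ?tofrac_neq0 ?sig_neq0 //.
by rewrite !rmorphD !rmorphM.
Qed.

Lemma sKM x y : sK (x * y) = sK x * sK y.
Proof.
have [a [b [b0 ->]]] := frac_rep x.
have [c [d [d0 ->]]] := frac_rep y.
rewrite mulf_div -!tofracM !sK_frac ?mulf_neq0 //.
by rewrite mulf_div !rmorphM.
Qed.

Lemma sK0 : sK 0 = 0.
Proof. by rewrite -tofrac0 sK_tofrac rmorph0 tofrac0. Qed.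

Lemma iterK_tofrac i a : iter i sK a%:F = (iter i sig a)%:F.
Proof. by elim: i => //= i ->; rewrite sK_tofrac. Qed.

Lemma iterKD i x y : iter i sK (x + y) = iter i sK x + iter i sK y.
Proof. by elim: i => //= i ->; rewrite sKD. Qed.

Lemma iterKM i x y : iter i sK (x * y) = iter i sK x * iter i sK y.
Proof. by elim: i => //= i ->; rewrite sKM. Qed.

Lemma iterK0 i : iter i sK 0 = 0.
Proof. by elim: i => //= i ->; rewrite sK0. Qed.

Lemma iterK_sum i n (F : 'I_n -> K) :
  iter i sK (\sum_(j < n) F j) = \sum_(j < n) iter i sK (F j).
Proof. exact: (big_morph _ (iterKD i) (iterK0 i)). Qed.

Lemma iter_sig_neq0 i a : a != 0 -> iter i sig a != 0.
Proof. by move=> a0; elim: i => //= i ih; exact: sig_neq0. Qed.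


Variable dR : nat -> R -> R.
Variables (iota : R) (cR : nat -> nat -> R).
Hypothesis dR0 : forall a, dR 0 a = a.
Hypothesis dR1 : forall a, dR 1 a = (sig a - a) * iota.
Hypothesis dRD : forall k a b, dR k (a + b) = dR k a + dR k b.
Hypothesis dRM : forall k a b,
  dR k (a * b) = \sum_(i < k.+1) iter i sig (dR (k - i)%N a) * dR i b.
Hypothesis dRI : forall i j a, dR i (dR j a) = cR i j * dR (i + j)%N a.

Definition sprod (u v : nat -> K) : nat -> K :=
  fun k => \sum_(i < k.+1) iter i sK (u (k - i)%N) * v i.

Definition PhiR (a : R) : nat -> K := fun k => (dR k a)%:F.

Lemma PhiRM a b : PhiR (a * b) = sprod (PhiR a) (PhiR b).
Proof.
apply: functional_extensionality => k; rewrite /PhiR /sprod dRM rmorph_sum.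
by apply: eq_bigr => i _; rewrite rmorphM /= iterK_tofrac.
Qed.

Lemma PhiRD a b k : PhiR (a + b) k = PhiR a k + PhiR b k.
Proof. by rewrite /PhiR dRD rmorphD. Qed.

Lemma iter_sig1 i : iter i sig 1 = 1.
Proof. by elim: i => //= i ->; rewrite rmorph1. Qed.

Lemma dR_one k : (0 < k)%N -> dR k 1 = 0.
Proof.
elim/ltn_ind: k => k IH k0.
have := dRM k 1 1; rewrite mul1r big_ord_recr /= subnn dR0 iter_sig1 mul1r.
case: k IH k0 => // k IH _.
rewrite big_ord_recl /= subn0 dR0 mulr1 big1 ?addr0; last first.
  by move=> i _; rewrite (IH i.+1) ?mulr0 // ltnS ltn_ord.
by move/eqP; rewrite eq_sym -subr_eq0 addrK => /eqP.
Qed.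


Lemma PhiR0 a : PhiR a 0 = a%:F.
Proof. by rewrite /PhiR dR0. Qed.

Lemma sprod1 v : sprod (PhiR 1) v = v.
Proof.
apply: functional_extensionality => k; rewrite /sprod big_ord_recr /= subnn.
rewrite PhiR0 iterK_tofrac iter_sig1 tofrac1 mul1r big1 ?add0r // => i _.
by rewrite /PhiR dR_one ?subn_gt0 // tofrac0 iterK0 mul0r.
Qed.

Lemma iterK_neq0 i s : s != 0 -> iter i sK s%:F != 0.
Proof. by move=> s0; rewrite iterK_tofrac; apply: tofrac_neq0; apply: iter_sig_neq0. Qed.
Arguments iterK_neq0 i {s}.

Lemma sprod_cancel s v w : s != 0 ->
  sprod (PhiR s) v = sprod (PhiR s) w -> v = w.
Proof.
move=> s0 E; apply: functional_extensionality => k.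
elim/ltn_ind: k => k IH.
have := congr1 (fun f => f k) E; rewrite /sprod !big_ord_recr /= subnn.
rewrite (eq_bigr (fun i : 'I_k => iter i sK (PhiR s (k - i)%N) * w i)); last first.
  by move=> i _; rewrite IH.
by move/addrI; rewrite PhiR0; apply: mulfI; apply: iterK_neq0.
Qed.

Arguments sprod_cancel {s v w}.

Lemma sum_geq (F : nat -> K) i k : (i <= k)%N ->
  \sum_(l < k.+1 | (i <= l)%N) F l = \sum_(j < (k - i).+1) F (j + i)%N.
Proof.
move=> ik.
transitivity (\sum_(i <= l < k.+1) F l); first by rewrite big_geq_mkord.
by rewrite -{1}[i]add0n big_addn big_mkord subSn.
Qed.

Lemma sprodA u v w : sprod u (sprod v w) = sprod (sprod u v) w.
Proof.
apply: functional_extensionality => k; rewrite /sprod.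
transitivity (\sum_(i < k.+1) \sum_(l < k.+1 | (i <= l)%N)
   iter l sK (u (k - l)%N) * (iter i sK (v (l - i)%N) * w i)).
  under eq_bigr => l _ do rewrite mulr_sumr (big_ord_widen k.+1
     (fun i => iter l sK (u (k - l)%N) * (iter i sK (v (l - i)%N) * w i)) (ltn_ord l)).
  rewrite (exchange_big_dep xpredT) //=.
apply: eq_bigr => i _.
rewrite (@sum_geq (fun l => iter l sK (u (k - l)%N) * (iter i sK (v (l - i)%N) * w i)) i k (ltn_ord i)) iterK_sum mulr_suml.
apply: eq_bigr => j _.
by rewrite addnK iterKM [(j + i)%N]addnC subnDA -iterD mulrA.
Qed.

Lemma sprodDr u v w k :
  sprod u (fun n => v n + w n) k = sprod u v k + sprod u w k.
Proof. by rewrite /sprod -big_split; apply: eq_bigr => i _; rewrite mulrDr. Qed.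

Fixpoint solf (U B : nat -> K) (k : nat) : nat -> K :=
  if k is k'.+1 then
    let f := solf U B k' in
    fun n => if n == k then
       (B k - \sum_(i < k) iter i sK (U (k - i)%N) * f i) / iter k sK (U 0%N)
     else f n
  else fun n => B 0%N / U 0%N.

Definition solve U B n := solf U B n n.

Lemma solf_stable U B k n : (n <= k)%N -> solf U B k n = solve U B n.
Proof.
elim: k => [|k IH] hn.
  by move: hn; rewrite leqn0 => /eqP ->.
rewrite /=; case: eqP => [->|/eqP nk]; first by rewrite /solve /= eqxx.
by apply: IH; rewrite -ltnS ltn_neqAle nk hn.
Qed.

Lemma solve_eq U B k : solve U B k.+1 =
  (B k.+1 - \sum_(i < k.+1) iter i sK (U (k.+1 - i)%N) * solve U B i)
    / iter k.+1 sK (U 0%N).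
Proof.
rewrite {1}/solve /= eqxx; congr ((_ - _) / _).
by apply: eq_bigr => i _; rewrite solf_stable // -ltnS.
Qed.

Lemma solveP s B : s != 0 -> sprod (PhiR s) (solve (PhiR s) B) = B.
Proof.
move=> s0; apply: functional_extensionality => k; rewrite /sprod.
have nz := iterK_neq0 k s0.
case: k nz => [|k] nz.
  rewrite big_ord1 /= PhiR0 /solve /= PhiR0 mulrC divfK //.
rewrite big_ord_recr /= subnn solve_eq PhiR0 mulrC divfK //.
by rewrite addrC subrK.
Qed.

Definition D (x : K) : nat -> K :=
  solve (PhiR \d_(repr x)) (PhiR \n_(repr x)).

Lemma D_spec x : sprod (PhiR \d_(repr x)) (D x) = PhiR \n_(repr x).
Proof. exact: solveP (denom_ratioP _). Qed.

Lemma key a s : s != 0 -> sprod (PhiR s) (D (a%:F / s%:F)) = PhiR a.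
Proof.
move=> s0; set x := a%:F / s%:F.
have E := fracE' x.
have d0 := denom_ratioP (repr x).
have := D_spec x.
move: E d0; set n := \n_(repr x); set d := \d_(repr x) => E d0 Dx.
have : (a%:F / s%:F == n%:F / d%:F :> K) by rewrite -E.
rewrite frac_eq // => /eqP ad.
apply: (sprod_cancel d0).
rewrite sprodA -(PhiRM d s) [d * s]mulrC (PhiRM s d) -sprodA Dx.
by rewrite -!PhiRM mulrC -ad mulrC.
Qed.

Arguments key a {s}.

Lemma D_tofrac a : D a%:F = PhiR a.
Proof. by have := @key a 1 (oner_neq0 R); rewrite tofrac1 divr1 sprod1. Qed.

Lemma D_mul x y : D (x * y) = sprod (D x) (D y).
Proof.
have [a [s [s0 ->]]] := frac_rep x; have [b [u [u0 ->]]] := frac_rep y.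
have xy : a%:F / s%:F * (b%:F / u%:F) = (a * b)%:F / (s * u)%:F :> K.
  by rewrite mulf_div -!tofracM.
apply: (sprod_cancel (mulf_neq0 s0 u0)); rewrite xy key ?mulf_neq0 //.
rewrite [s * u]mulrC (PhiRM u s) -sprodA (sprodA (PhiR s)) key //.
rewrite sprodA -(PhiRM u a) [u * a]mulrC (PhiRM a u) -sprodA key //.
by rewrite -PhiRM.
Qed.

Lemma D_add x y : D (x + y) = fun k => D x k + D y k.
Proof.
have [a [s [s0 ->]]] := frac_rep x; have [b [u [u0 ->]]] := frac_rep y.
have xy : a%:F / s%:F + b%:F / u%:F = (a * u + b * s)%:F / (s * u)%:F :> K.
  by rewrite addf_div ?tofrac_neq0 // -!tofracM -tofracD.
apply: (sprod_cancel (mulf_neq0 s0 u0)); rewrite xy key ?mulf_neq0 //.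
have h1 : sprod (PhiR (s * u)) (D (a%:F / s%:F)) = PhiR (u * a).
  by rewrite [s * u]mulrC (PhiRM u s) -sprodA key // -PhiRM.
have h2 : sprod (PhiR (s * u)) (D (b%:F / u%:F)) = PhiR (s * b).
  by rewrite (PhiRM s u) -sprodA key // -PhiRM.
apply: functional_extensionality => k.
by rewrite sprodDr h1 h2 PhiRD [a * u]mulrC [b * s]mulrC.
Qed.


Lemma D0 x : D x 0 = x.
Proof.
have [a [s [s0 ->]]] := frac_rep x.
have := congr1 (fun f => f 0%N) (key a s0); rewrite /sprod big_ord1 /= !PhiR0.
by move=> h; apply: (mulfI (tofrac_neq0 s0)); rewrite h mulrC divfK ?tofrac_neq0.
Qed.

Lemma alg1 (F : fieldType) (A S sA sS i y : F) : S != 0 -> sS != 0 ->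
  (sS - S) * i * (A / S) + sS * y = (sA - A) * i -> y = (sA / sS - A / S) * i.
Proof.
move=> h1 h2 E.
have -> : y = ((sA - A) * i - (sS - S) * i * (A / S)) / sS.
  by rewrite -E [X in X - _]addrC addrK mulrC mulKf.
by field; rewrite h1 h2.
Qed.

Lemma D1 x : D x 1 = (sK x - x) * iota%:F.
Proof.
have [a [s [s0 ->]]] := frac_rep x.
have := congr1 (fun f => f 1%N) (key a s0).
rewrite /sprod big_ord_recr big_ord1 /= D0 /PhiR !dR0 !dR1 sK_frac //.
rewrite !rmorphM !rmorphB /= sK_tofrac.
apply: alg1; [exact: tofrac_neq0 s0 | exact: tofrac_neq0 (sig_neq0 _ s0)].

Qed.

Lemma D_zero m : D 0 m = 0.
Proof.
rewrite -tofrac0 D_tofrac /PhiR.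
have h := dRD m 0 0; rewrite addr0 in h.
have -> : dR m 0 = 0 by move/eqP: h; rewrite eq_sym -subr_eq0 addrK => /eqP.
exact: tofrac0.
Qed.

Lemma D_sum m n (F : 'I_n -> K) : D (\sum_(j < n) F j) m = \sum_(j < n) D (F j) m.
Proof.
apply: (big_morph (fun x => D x m)) => [x y|]; first by rewrite D_add.
exact: D_zero.
Qed.

Definition cK (m l : nat) : K := (cR m l)%:F.

Lemma D_iterR y m l : D (D y%:F l) m = cK m l * D y%:F (m + l)%N.
Proof. by rewrite !D_tofrac /PhiR /= dRI rmorphM. Qed.

Definition G (u : R) (i j m l : nat) : K :=
  iter m sK (D (iter l sK (D u%:F (j - l)%N)) (i - m)%N).

Lemma expand u x i j : D (D (u%:F * x) j) i =
  \sum_(l < j.+1) \sum_(m < i.+1) G u i j m l * D (D x l) m.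
Proof.
rewrite D_mul /sprod D_sum; apply: eq_bigr => l _.
by rewrite D_mul /sprod.
Qed.


Definition rv N x : 'rV[K]_(N.+1) := \row_(k < N.+1) D x k.
Definition Am N u : 'M[K]_(N.+1) :=
  \matrix_(r < N.+1, k < N.+1)
    (if (r <= k)%N then iter r sK (D u%:F (k - r)%N) else 0).

Lemma rvM N u x : rv N (u%:F * x) = rv N x *m Am N u.
Proof.
apply/rowP => k; rewrite !mxE D_mul /sprod.
rewrite (big_ord_widen N.+1 (fun r => iter r sK (D u%:F (k - r)%N) * D x r)
   (ltn_ord k)) big_mkcond.
apply: eq_bigr => r _; rewrite !mxE ltnS.
by case: ifP => _; [rewrite mulrC | rewrite mulr0].
Qed.

Lemma detA N u : u != 0 -> \det (Am N u) != 0.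
Proof.
move=> u0; rewrite -det_tr det_trig; last first.
  by apply/is_trig_mxP => r k rk; rewrite !mxE leqNgt rk.
apply/prodf_neq0 => r _; rewrite !mxE leqnn subnn D0.
exact: iterK_neq0.
Qed.

Lemma principle N u a (L : 'rV[K]_(N.+1) -> K) : u != 0 ->
  (forall v w, L (v + w) = L v + L w) -> (forall c v, L (c *: v) = c * L v) ->
  (forall y, L (rv N y%:F) = 0) -> L (rv N (a%:F / u%:F)) = 0.
Proof.
move=> u0 LD LZ LR.
set x := a%:F / u%:F.
have L0 : L 0 = 0.
  have := LD 0 0; rewrite addr0 => h.
  by move/eqP: h; rewrite eq_sym -subr_eq0 addrK => /eqP.
have Lsum n (F : 'I_n -> 'rV_(N.+1)) : L (\sum_(k < n) F k) = \sum_(k < n) L (F k).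
  exact: (big_morph L LD L0).
set A := Am N u.
have ux : u%:F * x = a%:F by rewrite /x mulrC divfK ?tofrac_neq0.
have pw k : rv N x *m A ^+ k.+1 = rv N ((u ^+ k * a)%:F).
  elim: k => [|k IH]; first by rewrite expr1 -rvM ux expr0 mul1r.
  by rewrite exprSr -mulmxE mulmxA IH -rvM -tofracM exprS mulrA.
have CH := Cayley_Hamilton A.
set P := char_poly A in CH.
have sz : size P = N.+2 by rewrite size_char_poly.
have HP : horner_mx A P = \sum_(k < N.+2) P`_k *: A ^+ k.
  rewrite -{1}(coefK P) poly_def sz linear_sum; apply: eq_bigr => k _.
  by rewrite linearZ /= rmorphXn /= horner_mx_X.
have := congr1 (fun M => L (rv N x *m M)) CH.
rewrite /= HP mulmx0 L0 mulmx_sumr Lsum big_ord_recl /=.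
rewrite big1 => [|k _]; last by rewrite -scalemxAr LZ pw LR mulr0.
rewrite addr0 -scalemxAr LZ expr0 mulmx1 => /eqP; rewrite mulf_eq0 => /orP [|/eqP //].
rewrite /P char_poly_det mulf_eq0 signr_eq0 /= => h.
by move: (detA N u u0); rewrite h.
Qed.

Definition Lf N i j (al : nat -> nat -> K) (be : nat -> K) (v : 'rV[K]_(N.+1)) : K :=
  \sum_(l < j.+1) \sum_(m < i.+1) al m l * v 0 (inord (m + l))
  - \sum_(n < N.+1) be n * v 0 n.

Lemma LfD N i j al be v w : Lf N i j al be (v + w) = Lf N i j al be v + Lf N i j al be w.
Proof.
rewrite /Lf.
have -> : \sum_(l < j.+1) \sum_(m < i.+1) al m l * (v + w) 0 (inord (m + l)) =
  \sum_(l < j.+1) \sum_(m < i.+1) al m l * v 0 (inord (m + l)) +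
  \sum_(l < j.+1) \sum_(m < i.+1) al m l * w 0 (inord (m + l)).
  rewrite -big_split; apply: eq_bigr => l _; rewrite -big_split.
  by apply: eq_bigr => m _; rewrite mxE mulrDr.
have -> : \sum_(n < N.+1) be n * (v + w) 0 n =
   \sum_(n < N.+1) be n * v 0 n + \sum_(n < N.+1) be n * w 0 n.
  by rewrite -big_split; apply: eq_bigr => n _; rewrite mxE mulrDr.
by rewrite opprD addrACA.
Qed.

Lemma LfZ N i j al be c v : Lf N i j al be (c *: v) = c * Lf N i j al be v.
Proof.
rewrite /Lf mulrBr !mulr_sumr; congr (_ - _).
  apply: eq_bigr => l _; rewrite mulr_sumr; apply: eq_bigr => m _.
  by rewrite mxE mulrCA.
by apply: eq_bigr => n _; rewrite mxE mulrCA.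
Qed.

Lemma sum_pick i j (F : nat -> nat -> K) :
  \sum_(l < j.+1) \sum_(m < i.+1)
     (if (l == j :> nat) && (m == i :> nat) then F m l else 0) = F i j.
Proof.
rewrite big_ord_recr /= big1 ?add0r => [|l _]; last first.
  by apply: big1 => m _; rewrite (ltn_eqF (ltn_ord l)).
rewrite /ord_max /= eqxx /= big_ord_recr /= /ord_max /= eqxx big1 ?add0r // => m _.
by rewrite (ltn_eqF (ltn_ord m)).
Qed.


Lemma D_iter_gen n : forall i j x, (i + j)%N = n ->
  D (D x j) i = cK i j * D x (i + j)%N.
Proof.
elim/ltn_ind: n => n IH i j x ij.
have [a [u [u0 ex]]] := frac_rep x.
set N := (i + j)%N.
pose al m l := G u i j m l * cK m l.
pose be k := cK i j * iter k sK (D u%:F (N - k)%N).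
have hml (m : 'I_i.+1) (l : 'I_j.+1) : (m + l < N.+1)%N.
  by rewrite ltnS leq_add // -ltnS.
have LR y : Lf N i j al be (rv N y%:F) = 0.
  rewrite /Lf.
  have -> : \sum_(l < j.+1) \sum_(m < i.+1) al m l * (rv N y%:F) 0 (inord (m + l))
      = D (D (u%:F * y%:F) j) i.
    rewrite expand; apply: eq_bigr => l _; apply: eq_bigr => m _.
    by rewrite mxE inordK ?hml // D_iterR /al mulrA.
  have -> : \sum_(k < N.+1) be k * (rv N y%:F) 0 k = D (D (u%:F * y%:F) j) i.
    rewrite -tofracM D_iterR -/N tofracM D_mul /sprod mulr_sumr.
    by apply: eq_bigr => k _; rewrite mxE /be mulrA.
  by rewrite subrr.
have LX := @principle N u a (Lf N i j al be) u0 (@LfD N i j al be) (@LfZ N i j al be) LR.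
rewrite -ex in LX.
have ux : u%:F * x = a%:F by rewrite ex mulrC divfK ?tofrac_neq0.
have EX := expand u x i j.
rewrite ux D_iterR -/N -ux D_mul /sprod mulr_sumr in EX.
set e := D (D x j) i - cK i j * D x N.
have split : \sum_(l < j.+1) \sum_(m < i.+1) G u i j m l * D (D x l) m =
   \sum_(l < j.+1) \sum_(m < i.+1) al m l * D x (m + l)%N + G u i j i j * e.
  rewrite -(sum_pick i j (fun m l => G u i j m l * e)) -big_split.
  apply: eq_bigr => l _; rewrite -big_split; apply: eq_bigr => m _ /=.
  case: ifP => [/andP [/eqP el /eqP em] | h].
    by rewrite /al /e el em -mulrA -mulrDr subrKC.
  rewrite addr0 (IH (m + l)%N) /al ?mulrA //.
  move/negbT: h; rewrite negb_and => h.
  have mi := ltn_ord m; have lj := ltn_ord l.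
  rewrite -ij; move: h mi lj; rewrite !ltnS; case/orP => /eqP h; lia.
rewrite split in EX.
move: LX; rewrite /Lf.
have -> : \sum_(l < j.+1) \sum_(m < i.+1) al m l * (rv N x) 0 (inord (m + l))
   = \sum_(l < j.+1) \sum_(m < i.+1) al m l * D x (m + l)%N.
  apply: eq_bigr => l _; apply: eq_bigr => m _.
  by rewrite mxE inordK ?hml.
have -> : \sum_(n0 < N.+1) be n0 * (rv N x) 0 n0 =
   \sum_(k < N.+1) cK i j * (iter k sK (D u%:F (N - k)%N) * D x k).
  by apply: eq_bigr => k _; rewrite mxE /be mulrA.
rewrite EX opprD addrA subrr add0r => /eqP; rewrite oppr_eq0 mulf_eq0 => /orP [|].
  rewrite /G !subnn D0 D0 -iterD => h.
  by move: (iterK_neq0 (i + j) u0); rewrite h.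
by rewrite /e subr_eq0 => /eqP.
Qed.

Lemma D_iter i j x : D (D x j) i = cK i j * D x (i + j)%N.
Proof. exact: (@D_iter_gen (i + j)%N i j x (erefl _)). Qed.


Variable S : pred R.
Hypothesis S1 : 1 \in S.
Hypothesis SM : forall s t, s \in S -> t \in S -> s * t \in S.
Hypothesis S0 : 0 \notin S.
Hypothesis Ssig : forall s, s \in S -> sig s \in S.

Lemma S_neq0 s : s \in S -> s != 0.
Proof. by apply: contraTneq => ->. Qed.
Arguments S_neq0 {s}.

Lemma loc_tofrac r : loc S r%:F.
Proof. by exists r, 1; rewrite S1 tofrac1 divr1. Qed.

Lemma loc_add x y : loc S x -> loc S y -> loc S (x + y).
Proof.
move=> [a [s [sS ->]]] [b [t [tS ->]]].
exists (a * t + b * s), (s * t); split; first exact: SM.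
by rewrite addf_div ?tofrac_neq0 ?S_neq0 // tofracD !tofracM.
Qed.

Lemma loc_mul x y : loc S x -> loc S y -> loc S (x * y).
Proof.
move=> [a [s [sS ->]]] [b [t [tS ->]]].
exists (a * b), (s * t); split; first exact: SM.
by rewrite mulf_div !tofracM.
Qed.

Lemma loc_opp x : loc S x -> loc S (- x).
Proof.
move=> [a [s [sS ->]]]; exists (- a), s; split => //.
by rewrite tofracN mulNr.
Qed.

Lemma loc_sum n (F : 'I_n -> K) : (forall i, loc S (F i)) -> loc S (\sum_(i < n) F i).
Proof.
move=> h; elim/big_rec: _ => [|i y _ hy]; first by rewrite -tofrac0; exact: loc_tofrac.
exact: loc_add.
Qed.

Lemma iter_sigS k s : s \in S -> iter k sig s \in S.
Proof. by move=> sS; elim: k => //= k ih; exact: Ssig. Qed.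

Lemma loc_D k x : loc S x -> loc S (D x k).
Proof.
move=> [a [s [sS ex]]].
elim/ltn_ind: k => k IH.
have := congr1 (fun f => f k) (key a (S_neq0 sS)).
rewrite -ex /sprod big_ord_recr /= subnn PhiR0 iterK_tofrac => h.
set sg := (iter k sig s)%:F in h.
set T := \sum_(i < k) _ in h.
have sg0 : sg != 0 by apply: tofrac_neq0; apply: S_neq0; exact: iter_sigS.
have -> : D x k = (PhiR a k - T) * sg^-1.
  by rewrite -h [T + _]addrC addrK mulrAC mulfV // mul1r.
apply: loc_mul.
  apply: loc_add; first exact: loc_tofrac.
  apply: loc_opp; apply: loc_sum => i.
  apply: loc_mul; last exact: IH.
  rewrite /PhiR iterK_tofrac; exact: loc_tofrac.
exists 1, (iter k sig s); split; first exact: iter_sigS.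
by rewrite tofrac1 div1r.
Qed.

Lemma main_exist :
  [/\ (forall k x, loc S x -> loc S (D x k)), (forall x, D x 0 = x)
    & (forall x, D x 1 = (sK x - x) * iota%:F)] /\
  [/\ (forall k x y, D (x + y) k = D x k + D y k),
      (forall k x y, D (x * y) k =
          \sum_(i < k.+1) iter i sK (D x (k - i)%N) * D y i)
    & (forall i j x, D (D x j) i = cK i j * D x (i + j)%N)] /\
  (forall k a, D a%:F k = (dR k a)%:F).
Proof.
split; first by split; [exact: loc_D | exact: D0 | exact: D1].
split; first split.
- by move=> k x y; rewrite D_add.
- by move=> k x y; rewrite D_mul.
- exact: D_iter.
- by move=> k a; rewrite D_tofrac.
Qed.

Lemma main_uniq (d1 d2 : nat -> K -> K) :
  (forall k x y, loc S x -> loc S y ->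
     d1 k (x * y) = \sum_(i < k.+1) iter i sK (d1 (k - i)%N x) * d1 i y) ->
  (forall k a, d1 k a%:F = (dR k a)%:F) ->
  (forall k x y, loc S x -> loc S y ->
     d2 k (x * y) = \sum_(i < k.+1) iter i sK (d2 (k - i)%N x) * d2 i y) ->
  (forall k a, d2 k a%:F = (dR k a)%:F) ->
  forall k x, loc S x -> d1 k x = d2 k x.
Proof.
move=> M1 R1 M2 R2 k x lx.
have [a [s [sS ex]]] := lx.
have s0 := S_neq0 sS.
have sx : s%:F * x = a%:F by rewrite ex mulrC divfK ?tofrac_neq0.
elim/ltn_ind: k => k IH.
have E1 := M1 k _ _ (loc_tofrac s) lx.
have E2 := M2 k _ _ (loc_tofrac s) lx.
rewrite sx R1 in E1; rewrite sx R2 in E2.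
move: E2; rewrite E1 !big_ord_recr /= subnn R1 R2 dR0.
rewrite (eq_bigr (fun i : 'I_k => iter i sK (d2 (k - i)%N s%:F) * d2 i x)); last first.
  by move=> i _; rewrite R1 R2 IH.
move/addrI; apply: mulfI.
exact: iterK_neq0.
Qed.

End Ext.

Theorem proposition2p19
  (C : closedFieldType) (q : C) (hq1 : q != 1) (hq0 : q != 0)
  (R : idomainType) (phi : {rmorphism ratfun C -> R})
  (sig : {rmorphism R -> R}) (sig_bij : bijective sig)
  (sig_ext : forall f : ratfun C, sig (phi f) = phi (sigmaF q f))
  (dR : nat -> R -> R)
  (hdR : is_iter_qdiff q (fun _ => True) phi sig dR)
  (S : pred R) (S1 : 1 \in S)
  (SM : forall s t, s \in S -> t \in S -> s * t \in S)
  (S0 : 0 \notin S)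
  (Ssig : forall s, s \in S -> sig s \in S) :
  (exists d : nat -> {fraction R} -> {fraction R},
      is_iter_qdiff q (loc S) (fun f => (phi f)%:F) (frac_lift sig) d
      /\ forall k a, d k a%:F = (dR k a)%:F)
  /\
  (forall d1 d2 : nat -> {fraction R} -> {fraction R},
      is_iter_qdiff q (loc S) (fun f => (phi f)%:F) (frac_lift sig) d1 ->
      (forall k a, d1 k a%:F = (dR k a)%:F) ->
      is_iter_qdiff q (loc S) (fun f => (phi f)%:F) (frac_lift sig) d2 ->
      (forall k a, d2 k a%:F = (dR k a)%:F) ->
      forall k x, loc S x -> d1 k x = d2 k x).
Proof.
have [[_ h0 h1] [hD hM hI]] := hdR.
have sig_inj : injective sig := bij_inj sig_bij.
have dR0 : forall a, dR 0 a = a := fun a => h0 a I.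
have dR1 := fun a => h1 a I.
have dRD := fun k a b => hD k a b I I.
have dRM := fun k a b => hM k a b I I.
have dRI := fun i j a => hI i j a I.
split.
  have [[E1 E2 E3] [[E4 E5 E6] E7]] := @main_exist R sig sig_inj dR
    (phi (qm1t q)^-1) (fun i j => phi ((qbinom q (i + j) i)%:P)%:F)
    dR0 dR1 dRD dRM dRI S S1 SM S0 Ssig.
  exists (fun k x => @D R sig dR x k); split; last exact: E7.
  by split; split.
move=> d1 d2 [_ [_ M1 _]] R1 [_ [_ M2 _]] R2.
exact: (@main_uniq R sig sig_inj dR dR0 S S1 S0 d1 d2 M1 R1 M2 R2).
Qed.
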